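(* Let $\Gamma$ be a graph and let $f:\Gamma\to\Gamma$ be an irreducible, expanding graph map which is a homotopy equivalence and which is periodic on the vertex set of $\Gamma$ (i.e. $f_V:\mathcal{V}\Gamma\to\mathcal{V}\Gamma$ is a bijection). Then every fold decomposition of $f$ consists of at least $\mathfrak{S}(\Gamma)$ folds, where $\mathfrak{S}(\Gamma)$ is the stack score of $\Gamma$.
   Context: A graph $\Gamma$ is a finite 1-dimensional CW complex (multiple edges and loops allowed) with a chosen orientation on each edge; $\mathcal{V}\Gamma$ is its vertex set, $\mathcal{E}\Gamma$ its set of (positively oriented) edges, $\mathcal{E}^{\pm}\Gamma$ the set of edges with both orientations, $\bar e$ the reverse of $e$, and $\iota(e),\tau(e)$ the initial and terminal vertices. An edge path is a nonempty concatenation $u=e_1\cdots e_k$ of oriented edges with $\tau(e_i)=\iota(e_{i+1})$; $|u|=k$ counts edges without cancelling backtracks, and $u$ traverses an edge $e$ if $e$ or $\bar e$ occurs in it. A graph map $f:\Gamma_1\to\Gamma_2$ consists of a vertex map $f_V$ and an assignment of an edge path $f(e)$ in $\Gamma_2$ to each $e\in\mathcal{E}^\pm\Gamma_1$ with $\iota(f(e))=f_V(\iota(e))$ and $f(\bar e)=\overline{f(e)}$; it extends to edge paths by concatenation, powers are compositions, and $f$ is regarded as a continuous map. A graph isomorphism is a graph map with $f_V$ bijective which restricts to a bijection from $\mathcal{E}^\pm\Gamma_1$ onto the single edges $\mathcal{E}^\pm\Gamma_2$; an automorphism of $G$ is an isomorphism $G\to G$, and $\mathrm{Aut}(G)$ is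 the automorphism group. The transition matrix $T(f)$ of a self map has $(i,j)$ entry the number of times $f(e_i)$ traverses $e_j$. $f$ is irreducible if $T(f)$ is an irreducible matrix and every vertex has valence at least $3$; $f$ is expanding if $|f^n(e)|\to\infty$ as $n\to\infty$ for every edge $e$. Folds: for distinct oriented edges $e_0,e_1$ with $e_1\neq\bar e_0$ and $\iota(e_0)=\iota(e_1)$: the proper full fold of $e_1$ over $e_0$ subdivides $e_1=e_1''e_1'$ and identifies $e_1''$ with $e_0$ (map $e_1\mapsto e_0e_1'$, other edges fixed); the complete fold identifies $e_0$ and $e_1$ entirely; the partial fold subdivides $e_0=e_0'e_0''$, $e_1=e_1''e_1'$ and identifies $e_1''$ with $e_0'$ (map $e_0\mapsto e_0'e_0''$, $e_1\mapsto e_0'e_1'$). A fold decomposition of $f:\Gamma\to\Gamma$ with $m$ folds is an expression $f=h\circ f_m\circ\cdots\circ f_1$ with $\Gamma_1=\Gamma$, each $f_i:\Gamma_i\to\Gamma_{i+1}$ a fold and $h:\Gamma_{m+1}\to\Gamma$ a graph isomorphism. Stack score: a supergraph of $\Gamma$ is a graph $G$ containing $\Gamma$ as a subgraph. For a supergraph $G$ with $\mathcal{V}G=\mathcal{V}\Gamma$ and $\psi\in\mathrm{Aut}(G)$, let $\sim_\psi$ be the equivalence relation on $\mathcal{E}\Gamma$ (unoriented edges) generated by $a\sim_\psi\psi(a)$ whenever $\psi(a)$ (as an unoriented edge) lies in $\mathcal{E}\Gamma$. The stack score $\mathfrak{S}(\Gamma)$ is the minimum, over all such pairs $(G,\psi)$,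 of the number of $\sim_\psi$-equivalence classes. *)

(* Defs.v *)
From mathcomp Require Import all_boot all_order all_algebra.
From Stdlib Require Import ClassicalEpsilon.
Set Implicit Arguments. Unset Strict Implicit. Unset Printing Implicit Defensive.
Import GRing.Theory.

Record graph := Graph {
  gV : finType;
  gE : finType;            (* positively oriented edges *)
  gsrc : gE -> gV;
  gtgt : gE -> gV
}.

(* Oriented edges E^{+-}: (e, true) = e, (e, false) = \bar e. *)
Definition oedge (G : graph) : finType := (gE G * bool)%type.
Definition orev (G : graph) (x : oedge G) : oedge G := (x.1, ~~ x.2).
Definition oi (G : graph) (x : oedge G) : gV G :=
  if x.2 then gsrc x.1 else gtgt x.1.
Definition ot (G : graph) (x : oedge G) : gV G :=
  if x.2 then gtgt x.1 else gsrc x.1.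

(* [walk u p v]: p is a (possibly empty) sequence of consecutive oriented
   edges from u to v.  Edge paths in the paper are the nonempty walks. *)
Fixpoint walk (G : graph) (u : gV G) (p : seq (oedge G)) (v : gV G) : bool :=
  match p with
  | [::] => u == v
  | x :: p' => (oi x == u) && walk (ot x) p' v
  end.

Definition prev (G : graph) (p : seq (oedge G)) : seq (oedge G) :=
  rev (map (@orev G) p).

Fixpoint red (G : graph) (p : seq (oedge G)) : seq (oedge G) :=
  match p with
  | [::] => [::]
  | x :: p' =>
      match red p' with
      | y :: t => if y == orev x then t else x :: y :: t
      | [::] => [:: x]
      end
  end.

(* Maps: a vertex map and an edge path for each positive edge;              *)
(* f(\bar e) := \bar{f(e)}.                                                  *)
Record gmap (G1 G2 : graph) := GMap {
  gmV : gV G1 -> gV G2;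
  gmE : gE G1 -> seq (oedge G2)
}.

Definition gmO (G1 G2 : graph) (f : gmap G1 G2) (x : oedge G1) : seq (oedge G2) :=
  if x.2 then gmE f x.1 else prev (gmE f x.1).

(* image of a sequence of oriented edges (concatenation, no cancellation) *)
Definition gmP (G1 G2 : graph) (f : gmap G1 G2) (p : seq (oedge G1)) :=
  flatten (map (gmO f) p).

Definition is_cmap (G1 G2 : graph) (f : gmap G1 G2) : Prop :=
  forall e, walk (gmV f (gsrc e)) (gmE f e) (gmV f (gtgt e)).

Definition is_gmap (G1 G2 : graph) (f : gmap G1 G2) : Prop :=
  is_cmap f /\ forall e, gmE f e != [::].

Definition gmap_id (G : graph) : gmap G G := GMap (fun v => v) (fun e => [:: (e, true)]).

Definition gcomp (G1 G2 G3 : graph) (g : gmap G2 G3) (f : gmap G1 G2) : gmap G1 G3 :=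
  GMap (fun v => gmV g (gmV f v)) (fun e => gmP g (gmE f e)).

Fixpoint gpow (G : graph) (f : gmap G G) (n : nat) : gmap G G :=
  match n with
  | 0 => gmap_id G
  | n'.+1 => gcomp f (gpow f n')
  end.

Definition gmap_eq (G1 G2 : graph) (f g : gmap G1 G2) : Prop :=
  (forall v, gmV f v = gmV g v) /\ (forall e, gmE f e = gmE g e).

Definition is_graph_iso (G1 G2 : graph) (h : gmap G1 G2) : Prop :=
  is_gmap h /\ bijective (gmV h) /\
  exists psi : oedge G1 -> oedge G2, bijective psi /\ forall x, gmO h x = [:: psi x].

(* A homotopy between cellular maps f, g : G1 -> G2 is given by vertex      *)
(* tracks gamma_v (paths from f v to g v) with f(e) gamma_{tau e} homotopic *)
(* rel endpoints to gamma_{iota e} g(e), i.e. equal after free reduction.   *)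
Definition homotopic (G1 G2 : graph) (f g : gmap G1 G2) : Prop :=
  exists gamma : gV G1 -> seq (oedge G2),
    (forall v, walk (gmV f v) (gamma v) (gmV g v)) /\
    (forall e, red (gmE f e ++ gamma (gtgt e)) = red (gamma (gsrc e) ++ gmE g e)).

Definition homotopy_equiv (G1 G2 : graph) (f : gmap G1 G2) : Prop :=
  exists g : gmap G2 G1, is_cmap g /\
    homotopic (gcomp g f) (gmap_id G1) /\ homotopic (gcomp f g) (gmap_id G2).

Definition transition (G : graph) (f : gmap G G) : 'M[int]_(#|gE G|) :=
  \matrix_(i, j) Posz (count (fun x : oedge G => x.1 == enum_val j) (gmE f (enum_val i))).

Definition irreducible_matrix (n : nat) (M : 'M[int]_n) : Prop :=
  forall i j, exists k, (0 < k)%N /\ (0 < (M ^+ k) i j)%R.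

(* valence = number of oriented edges starting at v (loops count twice) *)
Definition valence (G : graph) (v : gV G) : nat := #|[set x : oedge G | oi x == v]|.

Definition irreducible_map (G : graph) (f : gmap G G) : Prop :=
  irreducible_matrix (transition f) /\ forall v : gV G, (3 <= valence v)%N.

Definition expanding (G : graph) (f : gmap G G) : Prop :=
  forall (e : gE G) (B : nat), exists N, forall n, (N <= n)%N -> (B < size (gmE (gpow f n) e))%N.

(* Folds (each described up to graph isomorphism of the target).           *)
Definition fold_cond (G : graph) (e0 e1 : oedge G) : Prop :=
  e0 <> e1 /\ e1 <> orev e0 /\ oi e0 = oi e1.

(* proper full fold of e1 over e0: e1 = e1'' e1', e1'' identified with e0;
   psi x is the image edge of x (x <> e1, \bar e1), psi e1 plays the role of e1' *)
Definition proper_full_fold (G G' : graph) (f : gmap G G') (e0 e1 : oedge G) : Prop :=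
  bijective (gmV f) /\
  exists psi : oedge G -> oedge G',
    bijective psi /\ (forall x, psi (orev x) = orev (psi x)) /\
    (forall x, x <> e1 -> x <> orev e1 ->
       oi (psi x) = gmV f (oi x) /\ gmO f x = [:: psi x]) /\
    oi (psi e1) = gmV f (ot e0) /\ ot (psi e1) = gmV f (ot e1) /\
    gmO f e1 = [:: psi e0; psi e1].

Definition complete_fold (G G' : graph) (f : gmap G G') (e0 e1 : oedge G) : Prop :=
  (forall y, exists v, gmV f v = y) /\
  (forall u v, gmV f u = gmV f v <->
      u = v \/ (u = ot e0 /\ v = ot e1) \/ (u = ot e1 /\ v = ot e0)) /\
  exists psi : oedge G -> oedge G',
    (forall y, exists x, psi x = y) /\
    (forall x y, psi x = psi y <->
       x = y \/ (x = e0 /\ y = e1) \/ (x = e1 /\ y = e0) \/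
       (x = orev e0 /\ y = orev e1) \/ (x = orev e1 /\ y = orev e0)) /\
    (forall x, psi (orev x) = orev (psi x)) /\
    (forall x, oi (psi x) = gmV f (oi x) /\ gmO f x = [:: psi x]).

(* partial fold: e0 = e0' e0'', e1 = e1'' e1', e1'' identified with e0';
   a = e0', b = e0'', c = e1', w = the new vertex *)
Definition partial_fold (G G' : graph) (f : gmap G G') (e0 e1 : oedge G) : Prop :=
  injective (gmV f) /\
  exists w : gV G',
    (forall v, gmV f v <> w) /\ (forall y, y = w \/ exists v, gmV f v = y) /\
    exists (psi : oedge G -> oedge G') (a b c : oedge G'),
      let X := fun x => [/\ x <> e0, x <> orev e0, x <> e1 & x <> orev e1] in
      (forall x, psi (orev x) = orev (psi x)) /\
      (forall x y, X x -> X y -> psi x = psi y -> x = y) /\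
      uniq [:: a.1; b.1; c.1] /\
      (forall x, X x -> (psi x).1 \notin [:: a.1; b.1; c.1]) /\
      (forall y, (exists x, X x /\ psi x = y) \/ y.1 \in [:: a.1; b.1; c.1]) /\
      oi a = gmV f (oi e0) /\ ot a = w /\ oi b = w /\ ot b = gmV f (ot e0) /\
      oi c = w /\ ot c = gmV f (ot e1) /\
      (forall x, X x -> oi (psi x) = gmV f (oi x) /\ gmO f x = [:: psi x]) /\
      gmO f e0 = [:: a; b] /\ gmO f e1 = [:: a; c].

Definition is_fold (G G' : graph) (f : gmap G G') : Prop :=
  is_gmap f /\
  exists e0 e1 : oedge G, fold_cond e0 e1 /\
    (proper_full_fold f e0 e1 \/ complete_fold f e0 e1 \/ partial_fold f e0 e1).

Inductive fold_chain (G : graph) : forall G' : graph, nat -> gmap G G' -> Prop :=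
  | fc_nil : @fold_chain G G 0 (gmap_id G)
  | fc_cons (G1 G2 : graph) (n : nat) (k : gmap G G1) (f : gmap G1 G2) :
      @fold_chain G G1 n k -> is_fold f -> @fold_chain G G2 n.+1 (gcomp f k).

Definition fold_decomposition (G : graph) (f : gmap G G) (m : nat) : Prop :=
  exists (G' : graph) (k : gmap G G') (h : gmap G' G),
    @fold_chain G G' m k /\ is_graph_iso h /\ gmap_eq f (gcomp h k).

(* A supergraph with the same vertex set: an edge type E' with endpoints in *)
(* gV G and an injection incl of gE G preserving endpoints.                 *)
Definition supergraph (G : graph) (E' : finType) (s t : E' -> gV G) : graph :=
  Graph s t.

Definition stack_rel (G : graph) (E' : finType) (s t : E' -> gV G)
  (incl : gE G -> E') (psi : gmap (supergraph s t) (supergraph s t)) : rel (gE G) :=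
  fun a b => (gmE psi (incl a) == [:: (incl b, true)])
             || (gmE psi (incl a) == [:: (incl b, false)]).

Definition stack_classes (G : graph) (E' : finType) (s t : E' -> gV G)
  (incl : gE G -> E') (psi : gmap (supergraph s t) (supergraph s t)) : nat :=
  let r := stack_rel incl psi in
  let r' := fun a b => r a b || r b a in
  #|[set [set b | connect r' a b] | a : gE G]|.

Definition stack_value (G : graph) (n : nat) : Prop :=
  exists (E' : finType) (s t : E' -> gV G) (incl : gE G -> E')
         (psi : gmap (supergraph s t) (supergraph s t)),
    injective incl /\ (forall e, s (incl e) = gsrc e /\ t (incl e) = gtgt e) /\
    is_graph_iso psi /\ stack_classes incl psi = n.

Definition stack_value_b (G : graph) : pred nat :=
  fun n => if excluded_middle_informative (stack_value G n) then true else false.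

Lemma stack_value_ex (G : graph) : exists n, stack_value_b G n.
Proof.
exists (stack_classes (G := G) (s := @gsrc G) (t := @gtgt G) id (gmap_id _)).
rewrite /stack_value_b; case: excluded_middle_informative => // [[]].
exists (gE G), (@gsrc G), (@gtgt G), id, (gmap_id _).
split; first by [].
split; first by [].
split=> //.
split.
  split=> [e|e] //=; by rewrite !eqxx.
split; first by exists id.
exists id; split; first by exists id.
by case=> e [].
Qed.

Definition stack_score (G : graph) : nat := ex_minn (stack_value_ex G).

(* Main.v *)
Require Import Defs.
From mathcomp Require Import all_boot all_order all_algebra zify.
From Stdlib Require Import ClassicalEpsilon.
Set Implicit Arguments. Unset Strict Implicit. Unset Printing Implicit Defensive.

Lemma card_oedge (G : graph) : #|oedge G| = (#|gE G| * 2)%N.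
Proof. by rewrite card_prod card_bool. Qed.

Lemma walk1 (G : graph) u (x : oedge G) v : walk u [:: x] v = (oi x == u) && (ot x == v).
Proof. by []. Qed.

Lemma walk_cat (G : graph) u p v q w :
  @walk G u p v -> walk v q w -> walk u (p ++ q) w.
Proof.
elim: p u => [|x p IH] u /=; first by move/eqP->.
by case/andP=> -> H1 H2; rewrite IH.
Qed.

Lemma oi_orev (G : graph) (x : oedge G) : oi (orev x) = ot x.
Proof. by case: x => e []. Qed.
Lemma ot_orev (G : graph) (x : oedge G) : ot (orev x) = oi x.
Proof. by case: x => e []. Qed.

Lemma walk_prev (G : graph) u p v : @walk G u p v -> walk v (Defs.prev p) u.
Proof.
elim: p u => [|x p IH] u /=; first by move/eqP->; rewrite /Defs.prev /=.
case/andP=> /eqP Hx Hw.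
have -> : Defs.prev (x :: p) = Defs.prev p ++ [:: orev x].
  by rewrite /Defs.prev /= rev_cons cats1.
apply: walk_cat (IH _ Hw) _.
by rewrite walk1 oi_orev ot_orev Hx !eqxx.
Qed.

Lemma gmO_walk (G1 G2 : graph) (g : gmap G1 G2) x :
  is_cmap g -> walk (gmV g (oi x)) (gmO g x) (gmV g (ot x)).
Proof.
move=> Hg; case: x => e [] /=; rewrite /gmO /oi /ot /=; first exact: Hg.
exact: walk_prev (Hg e).
Qed.

Lemma gmP_walk (G1 G2 : graph) (g : gmap G1 G2) u p v :
  is_cmap g -> walk u p v -> walk (gmV g u) (gmP g p) (gmV g v).
Proof.
move=> Hg; elim: p u => [|x p IH] u /=; first by move/eqP->; rewrite /gmP /=.
case/andP=> /eqP <- Hw.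
rewrite /gmP /=; apply: walk_cat (gmO_walk x Hg) _.
exact: IH.
Qed.

Lemma cmap_comp (G1 G2 G3 : graph) (g : gmap G2 G3) (k : gmap G1 G2) :
  is_cmap g -> is_cmap k -> is_cmap (gcomp g k).
Proof. by move=> Hg Hk e; rewrite /=; apply: gmP_walk (Hk e). Qed.

Definition alive (G G' : graph) (k : gmap G G') : {set gE G'} :=
  [set y | [exists a, exists s, gmE k a == [:: (y, s)]]].
Definition imgV (G G' : graph) (k : gmap G G') : {set gV G'} :=
  [set gmV k u | u : gV G].

Lemma imgV_comp (G G1 G2 : graph) (g : gmap G1 G2) (k : gmap G G1) :
  imgV (gcomp g k) = gmV g @: imgV k.
Proof. by rewrite /imgV -imset_comp. Qed.

Lemma alive_comp (G G1 G2 : graph) (g : gmap G1 G2) (k : gmap G G1) y z :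
  gmE g y = [:: z] -> y \in alive k -> z.1 \in alive (gcomp g k).
Proof.
move=> Hz; rewrite inE => /existsP [a /existsP [s /eqP Ha]].
rewrite inE; apply/existsP; exists a; apply/existsP.
exists (if s then z.2 else ~~ z.2).
rewrite /= Ha /gmP /= cats0 /gmO /=.
case: z Hz => z1 z2 Hz; case: s Ha => Ha /=; rewrite Hz //.
Qed.

Lemma alive_ends (G G1 : graph) (k : gmap G G1) y :
  is_cmap k -> y \in alive k -> gsrc y \in imgV k /\ gtgt y \in imgV k.
Proof.
move=> Hk; rewrite inE => /existsP [a /existsP [s /eqP Ha]].
move: (Hk a); rewrite Ha walk1 /oi /ot; clear Ha.
case: s => /= /andP [/eqP H1 /eqP H2]; rewrite /imgV.
  by split; apply/imsetP; [exists (gsrc a) | exists (gtgt a)].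
by split; apply/imsetP; [exists (gtgt a) | exists (gsrc a)].
Qed.

Lemma fst_eq (G1 G2 : graph) (psi : oedge G1 -> oedge G2) y y' :
  (forall y, psi (y, false) = orev (psi (y, true))) ->
  (psi (y, true)).1 = (psi (y', true)).1 ->
  psi (y, true) = psi (y', true) \/ psi (y, true) = psi (y', false).
Proof.
move=> Hr; rewrite Hr.
case: (psi (y, true)) => p b; case: (psi (y', true)) => p' b' /= ->.
rewrite /orev /=.
by case: b; case: b'; auto.
Qed.

Lemma fst_psi (G1 G2 : graph) (psi : oedge G1 -> oedge G2) x :
  (forall x, psi (orev x) = orev (psi x)) -> (psi x).1 = (psi (x.1, true)).1.
Proof.
move=> H; case: x => e [] //=.
by rewrite -[(e, false)]/(orev (e, true)) H.
Qed.

Lemma card_imset_pair (A B : finType) (g : A -> B) u v (S : {set A}) :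
  u != v ->
  (forall x y, g x = g y -> x = y \/ (x = u /\ y = v) \/ (x = v /\ y = u)) ->
  g u = g v ->
  (#|g @: S| + ((u \in S) && (v \in S)) = #|S|)%N.
Proof.
move=> nuv Hg guv.
case: (boolP ((u \in S) && (v \in S))) => [/andP [uS vS] | nS].
  have -> : g @: S = g @: (S :\ v).
    apply/setP => z; apply/imsetP/imsetP => [[x xS ->] | [x]].
      case: (eqVneq x v) => [-> | nxv]; first by exists u; [rewrite !inE uS andbT; apply: contraNneq nuv => -> | ].
      by exists x; rewrite // !inE nxv.
    by rewrite !inE => /andP [_ xS] ->; exists x.
  rewrite card_in_imset; last first.
    move=> x y; rewrite !inE => /andP [nxv _] /andP [nyv _] /Hg.
    case=> [// | [[_ eyv] | [exv _]]]; [by rewrite eyv eqxx in nyv | by rewrite exv eqxx in nxv].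
  by rewrite [in RHS](cardsD1 v) vS addn1.
rewrite addn0 card_in_imset // => x y xS yS /Hg.
case=> [// | [[ex ey] | [ex ey]]]; subst; by rewrite xS yS in nS.
Qed.

Lemma ne_fst (G : graph) (y : gE G) (e : oedge G) b : y != e.1 -> (y, b) <> e.
Proof. by move=> H E; rewrite -E eqxx in H. Qed.

Lemma fst_cases (G : graph) (x e : oedge G) : x.1 = e.1 -> x = e \/ x = orev e.
Proof. by case: x e => [x1 bx] [e1 be] /= ->; rewrite /orev /=; case: bx; case: be; auto. Qed.

Lemma fc_neq (G : graph) (e0 e1 : oedge G) : fold_cond e0 e1 -> e0.1 != e1.1.
Proof.
move=> [n01 [n10 _]]; apply/eqP => /esym /fst_cases [E|E]; [exact: n01 (esym E) | exact: n10 E].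
Qed.

Definition Phi_step (G G1 G2 : graph) (g : gmap G1 G2) (k : gmap G G1) : Prop :=
  (#|gE G2| + 2 * #|imgV (gcomp g k)| + #|alive k| + 2 * #|gV G1| <=
   1 + #|alive (gcomp g k)| + 2 * #|gV G2| + #|gE G1| + 2 * #|imgV k|)%N.

Lemma step_pff (G G1 G2 : graph) (g : gmap G1 G2) (k : gmap G G1) e0 e1 :
  fold_cond e0 e1 -> proper_full_fold g e0 e1 -> Phi_step g k.
Proof.
move=> fc [bV [psi [bpsi [Hrev [Hx _]]]]].
have E12 : #|gE G2| = #|gE G1|.
  by have := bij_eq_card bpsi; rewrite !card_oedge; lia.
have V12 : #|gV G2| = #|gV G1| by rewrite (bij_eq_card bV).
have I12 : (#|imgV (gcomp g k)| <= #|imgV k|)%N by rewrite imgV_comp leq_imset_card.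
pose phi := fun y => (psi (y, true)).1.
have Hr : forall y, psi (y, false) = orev (psi (y, true)) by move=> y; rewrite -Hrev.
have A12 : (#|alive k :\ e1.1| <= #|alive (gcomp g k)|)%N.
  rewrite -(@card_in_imset _ _ phi); last first.
    by move=> x y _ _ /(fst_eq Hr) [] /(bij_inj bpsi) [].
  apply: subset_leq_card; apply/subsetP => z /imsetP [y].
  rewrite in_setD1 => /andP [ny ya] ->.
  rewrite /phi. apply: (@alive_comp G G1 G2 g k y (psi (y, true)) _ ya).
  by have [_ <-] := Hx (y, true) (@ne_fst _ y e1 true ny) (@ne_fst _ y (orev e1) true ny).
have H := cardsD1 e1.1 (alive k); have Hb := leq_b1 (e1.1 \in alive k).
rewrite /Phi_step; lia.
Qed.

Lemma alive_ot (G G1 : graph) (k : gmap G G1) (e : oedge G1) :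
  is_cmap k -> e.1 \in alive k -> ot e \in imgV k.
Proof.
move=> Hk /(alive_ends Hk) [H1 H2]; rewrite /ot; by case: (e.2).
Qed.

Lemma step_cf (G G1 G2 : graph) (g : gmap G1 G2) (k : gmap G G1) e0 e1 :
  is_cmap k -> fold_cond e0 e1 -> complete_fold g e0 e1 -> Phi_step g k.
Proof.
move=> Hk fc [surjV [iffV [psi [surjpsi [iffpsi [Hrev Hall]]]]]].
have n01 := fc_neq fc.
pose phi := fun y => (psi (y, true)).1.
have Hr : forall y, psi (y, false) = orev (psi (y, true)) by move=> y; rewrite -Hrev.
have phiP : forall x y, phi x = phi y -> x = y \/ (x = e0.1 /\ y = e1.1) \/ (x = e1.1 /\ y = e0.1).
  move=> x y /(fst_eq Hr) [] /iffpsi [E | [[E1 E2] | [[E1 E2] | [[E1 E2] | [E1 E2]]]]];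
  try (move: (congr1 fst E) => /= ->; auto);
  move: (congr1 fst E1) (congr1 fst E2) => /= -> ->; auto.
have phie : phi e0.1 = phi e1.1.
  rewrite /phi -(fst_psi e0 Hrev) -(fst_psi e1 Hrev).
  by have [_ ->] := iffpsi e0 e1; auto.
have phiS : forall z, exists y, phi y = z.
  move=> z; have [x Hx] := surjpsi (z, true).
  by exists x.1; rewrite /phi -(fst_psi x Hrev) Hx.
have E12 : (#|gE G2| + 1 = #|gE G1|)%N.
  have H := card_imset_pair [set: gE G1] n01 phiP phie.
  have Hs : phi @: [set: gE G1] = [set: gE G2].
    apply/setP => z; rewrite inE; apply/imsetP.
    by have [y <-] := phiS z; exists y; rewrite ?inE.
  by rewrite Hs !inE !cardsT /= in H.
have A12 : (#|alive k| <= #|alive (gcomp g k)| + ((e0.1 \in alive k) && (e1.1 \in alive k)))%N.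
  rewrite -(card_imset_pair (alive k) n01 phiP phie) leq_add2r.
  apply: subset_leq_card; apply/subsetP => z /imsetP [y ya ->].
  rewrite /phi; apply: (@alive_comp G G1 G2 g k y (psi (y, true)) _ ya).
  by have [_ <-] := Hall (y, true).
have I12 := imgV_comp g k.
case: (eqVneq (ot e0) (ot e1)) => [Eu | nu].
  have injV : injective (gmV g).
    by move=> x y /iffV [// | [[-> ->] | [-> ->]]]; rewrite Eu.
  have V12 : (#|gV G1| <= #|gV G2|)%N by apply: leq_card injV.
  rewrite /Phi_step I12 card_imset //.
  have Hb := leq_b1 ((e0.1 \in alive k) && (e1.1 \in alive k)).
  lia.
have guv : gmV g (ot e0) = gmV g (ot e1) by apply/iffV; auto.
have V12 : (#|gV G2| + 1 = #|gV G1|)%N.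
  have H := card_imset_pair [set: gV G1] nu (fun x y => proj1 (iffV x y)) guv.
  have Hs : gmV g @: [set: gV G1] = [set: gV G2].
    apply/setP => z; rewrite inE; apply/imsetP.
    by have [y <-] := surjV z; exists y; rewrite ?inE.
  by rewrite Hs !inE !cardsT /= in H.
have Im12 := card_imset_pair (imgV k) nu (fun x y => proj1 (iffV x y)) guv.
have ac : (((e0.1 \in alive k) && (e1.1 \in alive k)) <= ((ot e0 \in imgV k) && (ot e1 \in imgV k)))%N.
  case: (boolP ((e0.1 \in alive k) && (e1.1 \in alive k))) => //= /andP [a0 a1].
  by rewrite (alive_ot Hk a0) (alive_ot Hk a1).
rewrite /Phi_step I12; lia.
Qed.

Lemma step_pf (G G1 G2 : graph) (g : gmap G1 G2) (k : gmap G G1) e0 e1 :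
  fold_cond e0 e1 -> partial_fold g e0 e1 -> Phi_step g k.
Proof.
move=> fc [injV [w [nw [covV [psi [a [b [c H]]]]]]]].
move: H => /= [Hrev [Hinj [_ [_ [Hcov [_ [_ [_ [_ [_ [_ [HX _]]]]]]]]]]]].
have n01 := fc_neq fc.
pose phi := fun y => (psi (y, true)).1.
have Hr : forall y, psi (y, false) = orev (psi (y, true)) by move=> y; rewrite -Hrev.
pose Xe := [set y | (y != e0.1) && (y != e1.1)].
have XeX : forall y b, y \in Xe ->
    [/\ (y, b) <> e0, (y, b) <> orev e0, (y, b) <> e1 & (y, b) <> orev e1].
  move=> y bb; rewrite inE => /andP [h0 h1].
  by split; [exact: (@ne_fst _ y e0 bb h0) | exact: (@ne_fst _ y (orev e0) bb h0)
            | exact: (@ne_fst _ y e1 bb h1) | exact: (@ne_fst _ y (orev e1) bb h1)].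
have cXe : (#|Xe| + 2 = #|gE G1|)%N.
  have -> : Xe = ~: [set e0.1; e1.1] by apply/setP => y; rewrite !inE negb_or.
  by rewrite -(cardsC [set e0.1; e1.1]) cards2 n01 addnC.
pose s3 := [:: a.1; b.1; c.1].
have E12 : (#|gE G2| <= #|Xe| + 3)%N.
  have sub : [set: gE G2] \subset phi @: Xe :|: [set x in s3].
    apply/subsetP => z _; rewrite inE.
    case: (Hcov (z, true)) => [[x [Xx Ex]] | ins]; last by rewrite inE ins orbT.
    apply/orP; left; apply/imsetP; exists x.1.
      rewrite inE; case: Xx => h0 h0' h1 h1'.
      apply/andP; split; apply/eqP => /(fst_cases (x:=x)) [] //.
    by rewrite /phi -(fst_psi x Hrev) Ex.
  have := subset_leq_card sub; rewrite cardsT cardsU.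
  have := leq_imset_card phi Xe.
  have : (#|[set x in s3]| <= 3)%N by rewrite cardsE (card_size s3).
  lia.
have A12 : (#|alive k| <= #|alive (gcomp g k)| + 2)%N.
  have inj : {in alive k :&: Xe &, injective phi}.
    move=> x y; rewrite !inE => /and3P [_ x0 x1] /and3P [_ y0 y1].
    have Xx : x \in Xe by rewrite inE x0 x1.
    have Xy : y \in Xe by rewrite inE y0 y1.
    move/(fst_eq Hr) => [] /(Hinj _ _ (XeX _ _ Xx) (XeX _ _ Xy)) [] //.
  have sub : phi @: (alive k :&: Xe) \subset alive (gcomp g k).
    apply/subsetP => z /imsetP [y]; rewrite in_setI => /andP [ya yX] ->.
    rewrite /phi; apply: (@alive_comp G G1 G2 g k y (psi (y, true)) _ ya).
    by have [_ <-] := HX (y, true) (XeX _ _ yX).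
  have := subset_leq_card sub; rewrite card_in_imset //.
  have := cardsID Xe (alive k).
  have : (#|alive k :\: Xe| <= 2)%N.
    apply: (@leq_trans #|~: Xe|); first by apply: subset_leq_card; rewrite setDE subsetIr.
    have := cardsC Xe; lia.
  lia.
have V12 : (#|gV G1| + 1 <= #|gV G2|)%N.
  have := max_card (mem (w |: (gmV g @: [set: gV G1]))).
  rewrite cardsU1 card_imset // cardsT.
  have -> : (w \notin gmV g @: [set: gV G1]) = true.
    apply/negP => /imsetP [v _ Ev]; exact: (nw v (esym Ev)).
  lia.
have I12 : (#|imgV (gcomp g k)| <= #|imgV k|)%N by rewrite imgV_comp leq_imset_card.
rewrite /Phi_step; lia.
Qed.

Lemma step_fold (G G1 G2 : graph) (g : gmap G1 G2) (k : gmap G G1) :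
  is_cmap k -> is_fold g -> Phi_step g k.
Proof.
move=> Hk [_ [e0 [e1 [fc [H | [H | H]]]]]].
- exact: step_pff fc H.
- exact: step_cf Hk fc H.
- exact: step_pf fc H.
Qed.

Lemma chain_inv (G G' : graph) n (k : gmap G G') :
  @fold_chain G G' n k ->
  is_cmap k /\ (#|gE G'| + 2 * #|imgV k| <= n + #|alive k| + 2 * #|gV G'|)%N.
Proof.
elim=> [| G1 G2 n' k' g Hc [Hk IH] Hf].
  split; first by move=> e; rewrite walk1 /oi /ot /= !eqxx.
  have H1 : (#|imgV (gmap_id G)| <= #|gV G|)%N by apply: max_card.
  have H2 : (#|gE G| <= #|alive (gmap_id G)|)%N.
    rewrite -cardsT; apply: subset_leq_card; apply/subsetP => y _.
    by rewrite inE; apply/existsP; exists y; apply/existsP; exists true.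
  lia.
split; first by apply: cmap_comp => //; case: Hf => [[]].
have := step_fold Hk Hf; rewrite /Phi_step; lia.
Qed.

Definition phiF (G : graph) (f : gmap G G) (a : gE G) : gE G := (head (a, true) (gmE f a)).1.
Definition sgnF (G : graph) (f : gmap G G) (a : gE G) : bool := (head (a, true) (gmE f a)).2.
Definition repF (G : graph) (f : gmap G G) (b : gE G) : gE G :=
  odflt b [pick a | [exists s, gmE f a == [:: (b, s)]]].
Definition domF (G : graph) (f : gmap G G) : {set gE G} :=
  [set a | (size (gmE f a) == 1%N) && (repF f (phiF f a) == a)].

Lemma domF_E (G : graph) (f : gmap G G) a : a \in domF f -> gmE f a = [:: (phiF f a, sgnF f a)].
Proof.
rewrite inE => /andP [/eqP Hs _]; rewrite /phiF /sgnF.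
by case: (gmE f a) Hs => [|x [|]] //= _; case: x.
Qed.

Lemma repF_spec (G : graph) (f : gmap G G) b : b \in alive f ->
  exists s, gmE f (repF f b) = [:: (b, s)].
Proof.
rewrite inE => /existsP [a Ha]; rewrite /repF.
case: pickP => [a' /existsP [s /eqP Hs] | /(_ a)]; last by rewrite Ha.
by exists s.
Qed.

Lemma domF_alive (G : graph) (f : gmap G G) a :
  a \in domF f -> phiF f a \in alive f /\ repF f (phiF f a) = a.
Proof.
move=> ad; have E := domF_E ad; move: ad; rewrite inE => /andP [_ /eqP ->]; split=> //.
by rewrite inE; apply/existsP; exists a; apply/existsP; exists (sgnF f a); rewrite E.
Qed.

Lemma alive_domF (G : graph) (f : gmap G G) b :
  b \in alive f -> repF f b \in domF f /\ phiF f (repF f b) = b.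
Proof.
move=> /repF_spec [s Hs].
have Hp : phiF f (repF f b) = b by rewrite /phiF Hs.
by split=> //; rewrite inE Hs Hp eqxx.
Qed.

Lemma card_alive_domF (G : graph) (f : gmap G G) : (#|alive f| <= #|domF f|)%N.
Proof.
apply: (leq_trans _ (leq_imset_card (phiF f) _)); apply: subset_leq_card.
apply/subsetP => b bA; have [H1 H2] := alive_domF bA.
by apply/imsetP; exists (repF f b).
Qed.

Lemma domF_ends (G : graph) (f : gmap G G) a : is_gmap f -> a \in domF f ->
  (if sgnF f a then gsrc (phiF f a) else gtgt (phiF f a)) = gmV f (gsrc a) /\
  (if sgnF f a then gtgt (phiF f a) else gsrc (phiF f a)) = gmV f (gtgt a).
Proof.
move=> [Hc _] ad; move: (Hc a); rewrite (domF_E ad) walk1 /oi /ot /=.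
by case/andP => /eqP -> /eqP ->.
Qed.

Definition LL (G : graph) : nat := (#|gV G|).+2`!.

Lemma LL_gt1 (G : graph) : (1 < LL G)%N.
Proof. rewrite /LL factS; have := fact_gt0 (#|gV G|).+1; nia. Qed.

Lemma LL_gt0 (G : graph) : (0 < LL G)%N.
Proof. exact: ltnW (LL_gt1 G). Qed.

Lemma iter_LL (G : graph) (s : gV G -> gV G) v : injective s -> iter (LL G) s v = v.
Proof.
move=> si.
have o0 := order_gt0 s v.
have o1 : (order s v <= #|gV G|)%N by apply: max_card.
have /dvdnP [q ->] : order s v %| LL G by apply: dvdn_fact; rewrite o0 /=; apply: (leq_trans o1); rewrite leqW // leqW.
elim: q => [|q IH] //=.
by rewrite mulSn iterD IH (iter_order si).
Qed.

Definition EE (G : graph) : finType := (gE G * 'I_(LL G))%type.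
Definition sE (G : graph) (f : gmap G G) (x : EE G) : gV G := iter x.2 (gmV f) (gsrc x.1).
Definition tE (G : graph) (f : gmap G G) (x : EE G) : gV G := iter x.2 (gmV f) (gtgt x.1).
Definition SG (G : graph) (f : gmap G G) : graph := supergraph (sE f) (tE f).
Definition j0 (G : graph) : 'I_(LL G) := Ordinal (LL_gt0 G).
Definition j1 (G : graph) : 'I_(LL G) := Ordinal (LL_gt1 G).

Lemma j01 (G : graph) : (j0 G == j1 G) = false.
Proof. by []. Qed.
Lemma j10 (G : graph) : (j1 G == j0 G) = false.
Proof. by []. Qed.

Definition Sf (G : graph) (f : gmap G G) (x : oedge (SG f)) : oedge (SG f) :=
  let: ((e, j), bb) := x in ((e, ordS j), bb).
Definition Sf' (G : graph) (f : gmap G G) (x : oedge (SG f)) : oedge (SG f) :=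
  let: ((e, j), bb) := x in ((e, ord_pred j), bb).

Definition Tf (G : graph) (f : gmap G G) (x : oedge (SG f)) : oedge (SG f) :=
  let: ((e, j), bb) := x in
  if (j == j1 G) && (e \in domF f) then ((phiF f e, j0 G), bb == sgnF f e)
  else if (j == j0 G) && (e \in alive f) then ((repF f e, j1 G), bb == sgnF f (repF f e))
  else x.

Lemma Tf_inv (G : graph) (f : gmap G G) : involutive (@Tf G f).
Proof.
move=> [[e j] bb]; rewrite /Tf.
case: (eqVneq j (j1 G)) => [-> | nj1] /=.
  case: (boolP (e \in domF f)) => ed /=.
    have [pa rp] := domF_alive ed.
    rewrite ?j01 ?eqxx pa /= rp.
    by case: bb; case: (sgnF f e).
  by rewrite ?j10 /= ?eqxx ?(negbTE ed).
case: (eqVneq j (j0 G)) => [-> | nj0] /=.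
  case: (boolP (e \in alive f)) => ea /=.
    have [rd pr] := alive_domF ea.
    rewrite ?eqxx ?rd /= ?pr.
    by case: bb; case: (sgnF f (repF f e)).
  by rewrite ?j01 /= ?eqxx ?(negbTE ea).
by rewrite (negbTE nj1) (negbTE nj0).
Qed.

Lemma Tf_orev (G : graph) (f : gmap G G) x : @Tf G f (orev x) = orev (Tf x).
Proof.
case: x => [[e j] bb]; rewrite /Tf /orev /=.
case: ifP => _; first by case: bb; case: (sgnF f e).
case: ifP => _ //; by case: bb; case: (sgnF f (repF f e)).
Qed.

Lemma Tf_oi (G : graph) (f : gmap G G) x : is_gmap f -> oi (@Tf G f x) = oi x.
Proof.
move=> hf; case: x => [[e j] bb]; rewrite /Tf.
case: (boolP ((j == j1 G) && (e \in domF f))) => [/andP [/eqP -> ed] | _] /=.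
  have [H1 H2] := domF_ends hf ed.
  rewrite /oi /= /sE /tE /=.
  by case: bb; case: (sgnF f e) H1 H2 => /= H1 H2; rewrite ?H1 ?H2.
case: (boolP ((j == j0 G) && (e \in alive f))) => [/andP [/eqP -> ea] | _] //=.
have [rd pr] := alive_domF ea.
have [H1 H2] := domF_ends hf rd.
rewrite pr in H1 H2.
rewrite /oi /= /sE /tE /=.
by case: bb; case: (sgnF f (repF f e)) H1 H2 => /= H1 H2; rewrite -?H1 -?H2.
Qed.

Lemma Tf_ot (G : graph) (f : gmap G G) x : is_gmap f -> ot (@Tf G f x) = ot x.
Proof.
move=> hf; by rewrite -oi_orev -Tf_orev Tf_oi // oi_orev.
Qed.

Lemma iter_ordS (G : graph) (s : gV G -> gV G) (j : 'I_(LL G)) v : injective s ->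
  iter (ordS j) s v = s (iter j s v).
Proof.
move=> si; rewrite /ordS /=.
case: (ltngtP j.+1 (LL G)) => [lt | gt | E].
- by rewrite modn_small.
- by move: gt; rewrite ltnNge ltn_ord.
- by rewrite E modnn /= -iterS E iter_LL.
Qed.

Lemma Sf_oi (G : graph) (f : gmap G G) x : injective (gmV f) ->
  oi (@Sf G f x) = gmV f (oi x).
Proof.
move=> si; case: x => [[e j] bb]; rewrite /oi /= /sE /tE /=.
by case: bb => /=; rewrite iter_ordS.
Qed.

Lemma Sf_ot (G : graph) (f : gmap G G) x : injective (gmV f) ->
  ot (@Sf G f x) = gmV f (ot x).
Proof.
move=> si; case: x => [[e j] bb]; rewrite /ot /= /sE /tE /=.
by case: bb => /=; rewrite iter_ordS.
Qed.

Lemma Sf_orev (G : graph) (f : gmap G G) x : @Sf G f (orev x) = orev (Sf x).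
Proof. by case: x => [[e j] bb]. Qed.

Lemma Sf_bij (G : graph) (f : gmap G G) : bijective (@Sf G f).
Proof.
exists (@Sf' G f) => [[[e j] bb] | [[e j] bb]] /=; by rewrite ?ordSK ?ord_predK.
Qed.

Definition psiS (G : graph) (f : gmap G G) : gmap (SG f) (SG f) :=
  @GMap (SG f) (SG f) (gmV f) (fun e : gE (SG f) => [:: @Tf G f (@Sf G f ((e, true) : oedge (SG f)))]).

Lemma psiS_iso (G : graph) (f : gmap G G) :
  is_gmap f -> bijective (gmV f) -> is_graph_iso (psiS f).
Proof.
move=> hf hb; have si := bij_inj hb.
split.
  split=> // e; rewrite walk1 Tf_oi // Tf_ot // Sf_oi // Sf_ot //.
  by rewrite /oi /ot /= !eqxx.
split=> //.
exists (fun x => Tf (Sf x)); split.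
  exact: (bij_comp (inv_bij (@Tf_inv G f)) (Sf_bij f)).
case=> e [] //.
by rewrite -[(e, false)]/(orev (e, true)) Sf_orev Tf_orev.
Qed.

Definition inclF (G : graph) (e : gE G) : EE G := (e, j0 G).

Definition Rr (G : graph) (f : gmap G G) : rel (gE G) :=
  @stack_rel G (EE G) (sE f) (tE f) (@inclF G) (psiS f).

Lemma ordS_j0 (G : graph) : ordS (j0 G) = j1 G.
Proof. by apply: val_inj; rewrite /= modn_small // LL_gt1. Qed.

Lemma Rr_dom (G : graph) (f : gmap G G) a : a \in domF f -> Rr f a (phiF f a).
Proof.
move=> ad; rewrite /Rr /stack_rel /= /inclF ordS_j0 /= ?eqxx ad /=.
by case: (sgnF f a); rewrite /= !eqxx ?orbT.
Qed.

Definition nxF (G : graph) (f : gmap G G) (a : gE G) : gE G :=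
  if a \in domF f then phiF f a else a.

Lemma conn_iter (G : graph) (f : gmap G G) a j :
  connect (fun x y => Rr f x y || Rr f y x) a (iter j (nxF f) a).
Proof.
elim: j => [|j IH]; first exact: connect0.
apply: (connect_trans IH); rewrite iterS /nxF.
case: ifP => ad; last exact: connect0.
by apply: connect1; rewrite Rr_dom.
Qed.

Lemma gpow_dom (G : graph) (f : gmap G G) N a :
  (forall i, (i < N)%N -> iter i (nxF f) a \in domF f) ->
  exists s, gmE (gpow f N) a = [:: (iter N (nxF f) a, s)].
Proof.
elim: N => [|N IH] H; first by exists true.
have [s Hs] := IH (fun i hi => H i (ltnW hi)).
have cd := H N (ltnSn N).
rewrite /= Hs /gmP /= cats0 {2}/nxF cd /gmO /= (domF_E cd).
by case: s {Hs}; [exists (sgnF f (iter N (nxF f) a)) | exists (~~ sgnF f (iter N (nxF f) a))].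
Qed.

Lemma escape (G : graph) (f : gmap G G) a : expanding f ->
  exists t, t \notin domF f /\ connect (fun x y => Rr f x y || Rr f y x) a t.
Proof.
move=> hexp; have [N HN] := hexp a 1%N.
have := HN N (leqnn N).
case: (boolP [forall i : 'I_N, iter i (nxF f) a \in domF f]) => [/forallP Hall | ].
  have [s ->] := gpow_dom (N := N) (a := a) (fun i hi => Hall (Ordinal hi)).
  by [].
rewrite negb_forall => /existsP [i Hi] _.
by exists (iter i (nxF f) a); split => //; apply: conn_iter.
Qed.

Lemma classes_le (G : graph) (f : gmap G G) : expanding f ->
  (stack_classes (@inclF G) (psiS f) <= #|~: domF f|)%N.
Proof.
move=> hexp; rewrite /stack_classes /=.
have sym : connect_sym (fun x y => Rr f x y || Rr f y x).
  by apply: sym_connect_sym => x y; rewrite orbC.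
apply: (leq_trans _ (leq_imset_card (fun t => [set b | connect (fun x y => Rr f x y || Rr f y x) t b]) _)).
apply: subset_leq_card; apply/subsetP => C /imsetP [a _ ->].
have [t [tn ct]] := escape a hexp.
apply/imsetP; exists t; first by rewrite inE.
by apply/setP => b; rewrite !inE (same_connect sym ct).
Qed.

Lemma stack_score_le (G : graph) (n : nat) : stack_value G n -> (stack_score G <= n)%N.
Proof.
move=> Hn; rewrite /stack_score; case: ex_minnP => s0 _ Hmin; apply: Hmin.
by rewrite /stack_value_b; case: excluded_middle_informative.
Qed.

Lemma stack_value_F (G : graph) (f : gmap G G) :
  is_gmap f -> bijective (gmV f) ->
  stack_value G (stack_classes (@inclF G) (psiS f)).
Proof.
move=> hf hb.
exists (EE G), (sE f), (tE f), (@inclF G), (psiS f).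
split; first by move=> x y /(congr1 fst).
split; first by [].
split; first exact: psiS_iso.
by [].
Qed.

Theorem theoremB (G : graph) (f : gmap G G) :
  is_gmap f -> irreducible_map f -> expanding f -> homotopy_equiv f ->
  bijective (gmV f) ->
  forall m : nat, fold_decomposition f m -> (stack_score G <= m)%N.
Proof.
move=> hf _ hexp _ hb m [G' [k [h [hc [[hg [bhV [psih [bpsih Hh]]]] [eqV eqE]]]]]].
have [Hk Hinv] := chain_inv hc.
have img : imgV k = [set: gV G'].
  apply/setP => y; rewrite inE; apply/imsetP.
  case: hb => fi fK Kf.
  exists (fi (gmV h y)) => //.
  apply: (bij_inj bhV); by rewrite -[RHS](eqV (fi (gmV h y))) Kf.
have E' : #|gE G'| = #|gE G|.
  by have := bij_eq_card bpsih; rewrite !card_oedge; lia.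
have Hr : forall y, psih (y, false) = orev (psih (y, true)).
  move=> y; have := Hh (y, false).
  rewrite /gmO /= -[gmE h y]/(gmO h (y, true)) (Hh (y, true)) /Defs.prev /=.
  by case.
have A : (#|alive k| <= #|alive f|)%N.
  rewrite -(@card_imset _ _ (fun y => (psih (y, true)).1)); last first.
    by move=> x y /(fst_eq Hr) [] /(bij_inj bpsih) [].
  apply: subset_leq_card; apply/subsetP => z /imsetP [y].
  rewrite inE => /existsP [a /existsP [s /eqP Ha]] ->.
  rewrite inE; apply/existsP; exists a; apply/existsP; exists (psih (y, s)).2.
  rewrite eqE /= Ha /gmP /= cats0 Hh.
  case: s {Ha} => /=; first by case: (psih (y, true)).
  by rewrite !Hr /orev /=; case: (psih (y, true)).
have C := classes_le hexp.
have D := card_alive_domF f.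
have CC := cardsC (domF f).
apply: (leq_trans (stack_score_le (stack_value_F hf hb))).
move: Hinv; rewrite img cardsT E'; lia.
Qed.
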